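(* Let $M=(I,O,T,t_0,\tau,\mathit{out})$ be a Moore system, let $\Phi$ be a CTL* state formula over inputs $I$ and outputs $O$, and let $A=(2^O,2^I,Q,q_0,\delta,\mathit{Acc})$ be an alternating hesitant tree automaton accepting exactly the computation trees satisfying $\Phi$. Then $M\models\Phi$ if and only if there exist functions $\mathit{rch}:Q\times T\to\{\mathit{true},\mathit{false}\}$ and $\rho:Q\times T\to\mathbb N$ satisfying $$\mathit{rch}(q_0,t_0)\wedge\bigwedge_{(q,t)\in Q\times T}\Big[\mathit{rch}(q,t)\rightarrow\delta(q,\mathit{out}(t))\big[(d,q')\mapsto \mathit{rch}(q',\tau(t,d))\wedge\rho(q,t)\triangleright_{q,q'}\rho(q',\tau(t,d))\big]\Big],$$ where the substitution replaces every atom $(d,q')$ of the positive Boolean formula $\delta(q,\mathit{out}(t))$ by the indicated conjunction, and $\triangleright_{q,q'}$ is: if $q,q'$ lie in the same set $Q^N_j$, the B\''uchi comparison ($\mathit{true}$ if $q\in\mathit{Acc}$, and $\rho(q,t)>\rho(q',\tau(t,d))$ otherwise); if $q,q'$ lie in the same set $Q^U_j$, the co-B\''uchi comparison ($\rho(q,t)>\rho(q',\tau(t,d))$ if $q\in\mathit{Acc}$, and $\rho(q,t)\ge\rho(q',\tau(t,d))$ otherwise); otherwise $\mathit{true}$.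
   Context: A Moore system has disjoint finite inputs $I$, outputs $O$, finite states $T$, initial state $t_0$, total transition function $\tau:T\times 2^I\to T$ and output function $\mathit{out}:T\to 2^O$; its computation tree has nodes $(2^I)^*$, node $w$ labelled $\mathit{out}(\tau(t_0,w))$, and $M\models\Phi$ means this tree satisfies $\Phi$ at the root. CTL* with inputs: state formulas are built from $\mathit{true},\mathit{false}$, outputs and negated outputs, $\wedge,\vee$, and $\mathsf A\varphi,\mathsf E\varphi$ for path formulas $\varphi$; path formulas are built from state formulas, inputs and negated inputs, $\wedge,\vee,\mathsf X,\mathsf U,\mathsf R$; on a tree path $n_1n_2\dots$ with $n_2=n_1\cdot e$, an input $i$ holds iff $i\in e$; otherwise semantics is standard. An alternating tree automaton $(2^O,2^I,Q,q_0,\delta,\mathit{acc})$ has $\delta:Q\times 2^O\to\mathcal B^+(2^I\times Q)$ (positive Boolean formulas, total with respect to directions); a run-tree on a computation tree labels the root with $(\epsilon,q_0)$ and, for a node labelled $(n,q)$, has children labelled $(n\cdot d_j,q_j)$ for a set $\{(d_j,q_j)\}$ satisfying $\delta(q,l(n))$; the automaton accepts if some run-tree has all branches accepting. It is hesitant if $Q$ is partitioned into sets $Q^N_1,\dots,Q^N_{k_N},Q^U_1,\dots,Q^U_{k_U}$ with a partial order on them such that for $q\in Q^N_j$ the atoms of $\delta(q,a)$ inside $Q^N_j$ are disjunctively related and all other atoms lie in lower sets, and dually for $q\in Q^U_j$ with conjunctively related atoms; a branch with state sequence $\pi$ is accepting iff either it eventually stays in some $Q^U_j$ and visits $\mathit{Acc}$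 finitely often, or eventually stays in some $Q^N_j$ and visits $\mathit{Acc}$ infinitely often. *)

(* Defs.v *)
From mathcomp Require Import all_boot.
Set Implicit Arguments. Unset Strict Implicit. Unset Printing Implicit Defensive.

(* CTL* with inputs.  Inputs I and outputs O are separate finite types *)
(* (hence disjoint); the alphabet 2^I is {set I}, 2^O is {set O}.      *)
Section CTLstar.
Variables (I O : finType).

Inductive sform : Type :=
  | STrue | SFalse
  | SOut of O | SNOut of O
  | SAnd of sform & sform | SOr of sform & sform
  | SA of pform | SE of pform
with pform : Type :=
  | PState of sform
  | PIn of I | PNIn of I
  | PAnd of pform & pform | POr of pform & pform
  | PX of pform | PU of pform & pform | PR of pform & pform.

Definition ltree := seq {set I} -> {set O}.

(* A path starting at node n is given by its stream of directions pi:
   the path is n, n.(pi 0), n.(pi 0).(pi 1), ...; input i holds at the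
   current position iff i \in pi 0. *)
Definition shift (pi : nat -> {set I}) (k : nat) : nat -> {set I} :=
  fun j => pi (k + j).

Fixpoint sat_s (l : ltree) (n : seq {set I}) (f : sform) {struct f} : Prop :=
  match f with
  | STrue => True
  | SFalse => False
  | SOut o => o \in l n
  | SNOut o => o \notin l n
  | SAnd f1 f2 => sat_s l n f1 /\ sat_s l n f2
  | SOr f1 f2 => sat_s l n f1 \/ sat_s l n f2
  | SA g => forall pi, sat_p l n pi g
  | SE g => exists pi, sat_p l n pi g
  end
with sat_p (l : ltree) (n : seq {set I}) (pi : nat -> {set I}) (g : pform)
    {struct g} : Prop :=
  match g with
  | PState f => sat_s l n f
  | PIn i => i \in pi 0
  | PNIn i => i \notin pi 0
  | PAnd g1 g2 => sat_p l n pi g1 /\ sat_p l n pi g2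
  | POr g1 g2 => sat_p l n pi g1 \/ sat_p l n pi g2
  | PX g1 => sat_p l (rcons n (pi 0)) (shift pi 1) g1
  | PU g1 g2 =>
      exists k, sat_p l (n ++ mkseq pi k) (shift pi k) g2 /\
        forall j, j < k -> sat_p l (n ++ mkseq pi j) (shift pi j) g1
  | PR g1 g2 =>
      forall k, sat_p l (n ++ mkseq pi k) (shift pi k) g2 \/
        exists j, j < k /\ sat_p l (n ++ mkseq pi j) (shift pi j) g1
  end.

End CTLstar.

Definition run_moore (I : finType) (T : Type) (tau : T -> {set I} -> T) (t0 : T)
  (w : seq {set I}) : T := foldl tau t0 w.

Definition comp_tree (I O T : finType) (t0 : T) (tau : T -> {set I} -> T)
  (out : T -> {set O}) : ltree I O :=
  fun w => out (run_moore tau t0 w).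

Definition moore_models (I O T : finType) (t0 : T) (tau : T -> {set I} -> T)
  (out : T -> {set O}) (Phi : sform I O) : Prop :=
  sat_s (comp_tree t0 tau out) [::] Phi.

Inductive pbf (A : Type) : Type :=
  | BTrue | BFalse | BAtom of A | BAnd of pbf A & pbf A | BOr of pbf A & pbf A.
Arguments BTrue {A}. Arguments BFalse {A}.

(* Value of the formula under the valuation v of its atoms; this is also
   the value after substituting each atom a by the proposition v a. *)
Fixpoint peval (A : Type) (v : A -> Prop) (b : pbf A) : Prop :=
  match b with
  | BTrue => True
  | BFalse => False
  | BAtom a => v a
  | BAnd b1 b2 => peval v b1 /\ peval v b2
  | BOr b1 b2 => peval v b1 \/ peval v b2
  end.

Fixpoint atoms (A : Type) (b : pbf A) : seq A :=
  match b with
  | BTrue | BFalse => [::]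
  | BAtom a => [:: a]
  | BAnd b1 b2 | BOr b1 b2 => atoms b1 ++ atoms b2
  end.

Fixpoint dnf (A : Type) (b : pbf A) : seq (seq A) :=
  match b with
  | BTrue => [:: [::]]
  | BFalse => [::]
  | BAtom a => [:: [:: a]]
  | BOr b1 b2 => dnf b1 ++ dnf b2
  | BAnd b1 b2 => [seq c1 ++ c2 | c1 <- dnf b1, c2 <- dnf b2]
  end.

Fixpoint cnf (A : Type) (b : pbf A) : seq (seq A) :=
  match b with
  | BTrue => [::]
  | BFalse => [:: [::]]
  | BAtom a => [:: [:: a]]
  | BAnd b1 b2 => cnf b1 ++ cnf b2
  | BOr b1 b2 => [seq c1 ++ c2 | c1 <- cnf b1, c2 <- cnf b2]
  end.

Definition disj_related (A : eqType) (P : pred A) (b : pbf A) : bool :=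
  all (fun c => size (undup (filter P c)) <= 1) (dnf b).

Definition conj_related (A : eqType) (P : pred A) (b : pbf A) : bool :=
  all (fun c => size (undup (filter P c)) <= 1) (cnf b).

(* The partition of Q is given by cls : Q -> K (the block Q_j of q is   *)
(* cls q); isN j tells whether block j is a Q^N block (true) or a Q^U   *)
(* block (false); ltK is the strict partial order on the blocks         *)
(* ("ltK j' j" = block j' is lower than block j).                       *)
Section Automata.
Variables (I O Q K : finType) (q0 : Q)
  (delta : Q -> {set O} -> pbf ({set I} * Q)) (Acc : {set Q})
  (cls : Q -> K) (isN : K -> bool) (ltK : rel K).

Definition hesitant : Prop :=
  irreflexive ltK /\ transitive ltK /\
  forall (q : Q) (a : {set O}),
    (forall x, x \in atoms (delta q a) ->
       (cls x.2 == cls q) || ltK (cls x.2) (cls q)) /\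
    (if isN (cls q)
     then disj_related (fun x : {set I} * Q => cls x.2 == cls q) (delta q a)
     else conj_related (fun x : {set I} * Q => cls x.2 == cls q) (delta q a)).

(* A run-tree is represented by the (prefix-closed) set R of the label
   paths x = [:: (d_1,q_1); ...; (d_k,q_k)] from the root; the node x is
   labelled (map fst x, last q0 (map snd x)); the root [::] is labelled
   (epsilon, q0); the children of x are labelled by the set
   {(d,q') | R (rcons x (d,q'))}, which must satisfy delta. *)
Definition run_tree (l : ltree I O) (R : seq ({set I} * Q) -> Prop) : Prop :=
  R [::] /\
  (forall x a, R (rcons x a) -> R x) /\
  (forall x, R x ->
     peval (fun a => R (rcons x a))
           (delta (last q0 (map snd x)) (l (map fst x)))).

Definition branch (R : seq ({set I} * Q) -> Prop) (b : nat -> {set I} * Q)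
  : Prop := forall k, R (mkseq b k).

Definition bstates (b : nat -> {set I} * Q) (k : nat) : Q :=
  if k is k'.+1 then (b k').2 else q0.

Definition hesitant_accepting (st : nat -> Q) : Prop :=
  exists (j : K) (N : nat),
    (forall k, N <= k -> cls (st k) = j) /\
    (if isN j
     then (forall m, exists k, m <= k /\ st k \in Acc)
     else (exists m, forall k, m <= k -> st k \notin Acc)).

Definition accepts (l : ltree I O) : Prop :=
  exists R, run_tree l R /\
    forall b, branch R b -> hesitant_accepting (bstates b).

Definition rank_cmp (q q' : Q) (r r' : nat) : bool :=
  if cls q == cls q' then
    if isN (cls q) then (q \in Acc) || (r' < r)
    else if q \in Acc then r' < r else r' <= r
  else true.

End Automata.

(* Main.v *)
Require Import Defs.
From mathcomp Require Import all_boot.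
From Stdlib Require Import ClassicalEpsilon Classical Lia.
From mathcomp Require Import zify.
Set Implicit Arguments. Unset Strict Implicit. Unset Printing Implicit Defensive.

Definition dec (P : Prop) : bool := if excluded_middle_informative P then true else false.
Lemma decP (P : Prop) : dec P <-> P.
Proof. rewrite /dec; case: excluded_middle_informative => //. Qed.

Section PBF.
Variable A : eqType.

Lemma peval_mono (v w : A -> Prop) (b : pbf A) :
  (forall a, a \in atoms b -> v a -> w a) -> peval v b -> peval w b.
Proof.
elim: b => //= [a|b1 IH1 b2 IH2|b1 IH1 b2 IH2] H.
- by apply: H; rewrite inE.
- case=> h1 h2; split; [apply: IH1 h1|apply: IH2 h2] => a ha; apply: H;
    by rewrite mem_cat ha ?orbT.
- case=> [h1|h2]; [left; apply: IH1 h1|right; apply: IH2 h2] => a ha; apply: H;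
    by rewrite mem_cat ha ?orbT.
Qed.

Lemma peval_dnf (v : A -> Prop) (b : pbf A) :
  peval v b -> exists2 c, c \in dnf b & forall a, a \in c -> v a.
Proof.
elim: b => //= [|a|b1 IH1 b2 IH2|b1 IH1 b2 IH2].
- by move=> _; exists [::]; rewrite ?inE.
- by move=> h; exists [:: a]; rewrite ?inE // => x; rewrite inE => /eqP->.
- case=> /IH1 [c1 h1 e1] /IH2 [c2 h2 e2]; exists (c1 ++ c2).
    by apply/allpairsP; exists (c1, c2).
  by move=> a; rewrite mem_cat => /orP[/e1|/e2].
- case=> [/IH1 [c h e]|/IH2 [c h e]]; exists c => //; by rewrite mem_cat h ?orbT.
Qed.

Lemma dnf_peval (v : A -> Prop) (b : pbf A) c :
  c \in dnf b -> (forall a, a \in c -> v a) -> peval v b.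
Proof.
elim: b c => [||a|b1 IH1 b2 IH2|b1 IH1 b2 IH2] c /=.
- by [].
- by rewrite in_nil.
- by rewrite inE => /eqP-> H; apply: H; rewrite inE.
- move=> /allpairsP [[c1 c2] [/= h1 h2 ->]] H; split.
    by apply: (IH1 c1) => // a ha; apply: H; rewrite mem_cat ha.
  by apply: (IH2 c2) => // a ha; apply: H; rewrite mem_cat ha orbT.
- rewrite mem_cat => /orP[h|h] H; [left; exact: IH1 h H|right; exact: IH2 h H].
Qed.

Lemma peval_cnf (v : A -> Prop) (b : pbf A) :
  peval v b -> forall C, C \in cnf b -> exists2 a, a \in C & v a.
Proof.
elim: b => [_ C|f C|a h C|b1 IH1 b2 IH2|b1 IH1 b2 IH2] /=.
- by rewrite in_nil.
- by case: f.
- by rewrite inE => /eqP->; exists a; rewrite ?inE.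
- case=> h1 h2 C; rewrite mem_cat => /orP[/(IH1 h1)|/(IH2 h2)] //.
- move=> h C /allpairsP [[c1 c2] [/= i1 i2 ->]].
  case: h => [/IH1 /(_ _ i1) [a ha va]|/IH2 /(_ _ i2) [a ha va]];
    exists a => //; by rewrite mem_cat ha ?orbT.
Qed.

Lemma cnf_peval (v : A -> Prop) (b : pbf A) :
  (forall C, C \in cnf b -> exists2 a, a \in C & v a) -> peval v b.
Proof.
elim: b => [H|H|a H|b1 IH1 b2 IH2 H|b1 IH1 b2 IH2 H] /=.
- by [].
- by case: (H [::]); rewrite ?inE.
- by case: (H [:: a]); rewrite ?inE // => x; rewrite inE => /eqP->.
- split; [apply: IH1|apply: IH2] => C hC; apply: H; by rewrite mem_cat hC ?orbT.
- case: (classic (peval v b1)) => h1; [by left|right].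
  have [C1 hC1 nC1] : exists2 C1, C1 \in cnf b1 & forall a, a \in C1 -> ~ v a.
    apply: NNPP => nex; apply: h1; apply: IH1 => C hC.
    apply: NNPP => nC; apply: nex; exists C => // a ha va; apply: nC; by exists a.
  apply: IH2 => C2 hC2.
  have [a] := H (C1 ++ C2) (introT allpairsP (ex_intro _ (C1, C2) (And3 hC1 hC2 erefl))).
  rewrite mem_cat => /orP[ha va|ha va]; first by case: (nC1 a ha va).
  by exists a.
Qed.
End PBF.

Lemma undup_le1 (T : eqType) (s : seq T) x y :
  size (undup s) <= 1 -> x \in s -> y \in s -> x = y.
Proof.
rewrite -(mem_undup s) => hs; rewrite -(mem_undup s).
case: (undup s) hs => [|z [|w u]] //= _; rewrite !inE => /eqP-> /eqP-> //.
Qed.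

Lemma noninc_le (f : nat -> nat) N :
  (forall k, N <= k -> f k.+1 <= f k) -> forall k, N <= k -> f k <= f N.
Proof.
move=> H; elim=> [|k IH]; first by rewrite leqn0 => /eqP->.
rewrite leq_eqVlt => /orP[/eqP<-//|hk].
exact: leq_trans (H k hk) (IH hk).
Qed.

Lemma noninc_stab (f : nat -> nat) N :
  (forall k, N <= k -> f k.+1 <= f k) ->
  exists2 M, N <= M & forall k, M <= k -> f k = f M.
Proof.
move=> H.
suff: forall v M, N <= M -> f M <= v -> exists2 M', N <= M' & forall k, M' <= k -> f k = f M'.
  by move/(_ (f N) N (leqnn N) (leqnn _)).
elim=> [|v IH] M hM hv.
- exists M => // k hk; apply/eqP; rewrite eqn_leq (noninc_le (N:=M)) //=.
    by rewrite (leq_trans hv).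
  by move=> j hj; apply: H; apply: leq_trans hj.
- case: (classic (exists k, M <= k /\ f k < f M)) => [[k [hk lt]]|nk].
    apply: (IH k); first exact: leq_trans hk.
    by rewrite -ltnS (leq_trans lt).
  exists M => // k hk; apply/eqP; rewrite eqn_leq (noninc_le (N:=M)) //=.
    by rewrite leqNgt; apply/negP => lt; apply: nk; exists k.
  by move=> j hj; apply: H; apply: leq_trans hj.
Qed.

Lemma strict_dec_false (f : nat -> nat) N :
  (forall k, N <= k -> f k.+1 < f k) -> False.
Proof.
move=> H.
have: forall n, f (N + n) + n <= f N.
  elim=> [|n IH]; first by rewrite !addn0.
  have := H (N + n) (leq_addr _ _).
  rewrite (_ : N + n.+1 = (N + n).+1) ?addnS //; move: IH; lia.
move/(_ (f N).+1); lia.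
Qed.

Section Chains.
Variable A : Type.

Lemma chain_exists (P : seq A -> Prop) x0 :
  P x0 -> (forall x, P x -> exists2 y, 0 < size y & P (x ++ y)) ->
  exists X : nat -> seq A, X 0 = x0 /\
    forall m, P (X m) /\ exists2 y, 0 < size y & X m.+1 = X m ++ y.
Proof.
move=> P0 step.
have H : forall x, exists y : seq A, P x -> 0 < size y /\ P (x ++ y).
  move=> x; case: (classic (P x)) => [px|npx].
    by case: (step x px) => y h1 h2; exists y.
  by exists [::].
pose f x := proj1_sig (constructive_indefinite_description _ (H x)).
have fP : forall x, P x -> 0 < size (f x) /\ P (x ++ f x).
  by move=> x; rewrite /f; case: constructive_indefinite_description.
exists (fun m => iter m (fun x => x ++ f x) x0); split => //.
elim=> [|m [IH _]] /=.
  by split => //; exists (f x0); case: (fP _ P0).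
have [h1 h2] := fP _ IH.
split => //; exists (f (iter m.+1 (fun x => x ++ f x) x0)) => //.
by case: (fP _ h2).
Qed.

Lemma take_mkseq (f : nat -> A) k n : k <= n -> take k (mkseq f n) = mkseq f k.
Proof. by move=> kn; rewrite /mkseq -map_take take_iota (minn_idPl kn). Qed.

Lemma limit_branch (a0 : A) (X : nat -> seq A) :
  (forall m, exists2 y, 0 < size y & X m.+1 = X m ++ y) ->
  exists b : nat -> A,
    (forall m, mkseq b (size (X m)) = X m) /\
    (forall k, k <= size (X k)) /\
    (forall k, mkseq b k = take k (X k)).
Proof.
move=> HX.
have pre : forall m n, exists z, X (m + n) = X m ++ z.
  move=> m; elim=> [|n [z IH]]; first by exists [::]; rewrite addn0 cats0.
  case: (HX (m + n)) => y _ e; exists (z ++ y); by rewrite addnS e IH catA.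
have sz : forall k, k <= size (X k).
  elim=> // k IH; case: (HX k) => y hy ->; rewrite size_cat.
  by rewrite -addn1 leq_add.
have nthX : forall m n i, i < size (X m) -> i < size (X n) ->
    nth a0 (X m) i = nth a0 (X n) i.
  move=> m n i hm hn.
  have [z1 e1] := pre m (maxn m n - m).
  have [z2 e2] := pre n (maxn m n - n).
  move: e1 e2; rewrite subnKC ?leq_maxl // subnKC ?leq_maxr // => ->.
  by move=> e; have := congr1 (fun s => nth a0 s i) e; rewrite /= !nth_cat hm hn.
exists (fun k => nth a0 (X k.+1) k).
have mk : forall m, mkseq (fun k => nth a0 (X k.+1) k) (size (X m)) = X m.
  move=> m; apply: (@eq_from_nth _ a0); rewrite size_mkseq // => i hi.
  rewrite nth_mkseq //; apply: nthX => //; exact: sz.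
split => //; split => // k.
by rewrite -(mk k) take_mkseq.
Qed.

Lemma prefix_closed (R : seq A -> Prop) :
  (forall x a, R (rcons x a) -> R x) -> forall x y, R (x ++ y) -> R x.
Proof.
move=> H x; elim/last_ind => [|y a IH]; first by rewrite cats0.
by rewrite -rcons_cat => /H.
Qed.

Lemma prefix_take (R : seq A -> Prop) :
  (forall x a, R (rcons x a) -> R x) -> forall x k, R x -> R (take k x).
Proof.
move=> H x k; rewrite -{1}(cat_take_drop k x); exact: prefix_closed.
Qed.
End Chains.

Section Run.
Variables (I O T Q K : finType) (t0 : T) (tau : T -> {set I} -> T) (out : T -> {set O})
  (q0 : Q) (delta : Q -> {set O} -> pbf ({set I} * Q)) (Acc : {set Q})
  (cls : Q -> K) (isN : K -> bool) (ltK : rel K).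
Hypothesis Hhes : hesitant delta cls isN ltK.

Local Notation atom := ({set I} * Q)%type.
Local Notation l := (comp_tree t0 tau out).
Definition stt (x : seq atom) := last q0 (map snd x).
Definition mt (x : seq atom) := run_moore tau t0 (map fst x).

Lemma stt_rcons x a : stt (rcons x a) = a.2.
Proof. by rewrite /stt map_rcons last_rcons. Qed.
Lemma mt_rcons x a : mt (rcons x a) = tau (mt x) a.1.
Proof. by rewrite /mt map_rcons /run_moore foldl_rcons. Qed.
Lemma bstates_mk b k : bstates q0 b k = stt (mkseq b k).
Proof. by case: k => //= k; rewrite mkseqS stt_rcons. Qed.

Definition mu (j : K) := #|[set j' | ltK j' j]|.
Lemma mu_lt j' j : ltK j' j -> mu j' < mu j.
Proof.
case: Hhes => irr [tr _] h; apply: proper_card; apply/properP; split.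
  by apply/subsetP => x; rewrite !inE => hx; apply: tr hx h.
by exists j'; rewrite !inE ?h ?irr.
Qed.

Section Sound.
Variables (rch : Q -> T -> bool) (rho : Q -> T -> nat).
Hypothesis h0 : rch q0 t0.
Hypothesis hstep : forall q t, rch q t ->
  peval (fun x : atom => rch x.2 (tau t x.1) /\
          rank_cmp Acc cls isN q x.2 (rho q t) (rho x.2 (tau t x.1)))
        (delta q (out t)).

Inductive Rs : seq atom -> Prop :=
| Rs0 : Rs [::]
| RsS x a : Rs x -> a \in atoms (delta (stt x) (out (mt x))) ->
    rch a.2 (tau (mt x) a.1) ->
    rank_cmp Acc cls isN (stt x) a.2 (rho (stt x) (mt x)) (rho a.2 (tau (mt x) a.1)) ->
    Rs (rcons x a).

Lemma Rs_inv x a : Rs (rcons x a) ->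
  [/\ Rs x, a \in atoms (delta (stt x) (out (mt x))),
    rch a.2 (tau (mt x) a.1) &
    rank_cmp Acc cls isN (stt x) a.2 (rho (stt x) (mt x)) (rho a.2 (tau (mt x) a.1))].
Proof.
move E: (rcons x a) => z h; case: h E => [|x' a' h1 h2 h3 h4] E.
  by move/(congr1 size): E; rewrite size_rcons.
by case: (rcons_inj E) => -> ->.
Qed.

Lemma Rs_rch x : Rs x -> rch (stt x) (mt x).
Proof. by elim=> // x' a _ _ _ h _; rewrite stt_rcons mt_rcons. Qed.

Lemma sound : accepts q0 delta Acc cls isN l.
Proof.
exists Rs; split.
  split; first exact: Rs0.
  split; first by move=> x a /Rs_inv [].
  move=> x Rx; have := hstep (Rs_rch Rx).
  apply: peval_mono => a ha [h1 h2]; exact: RsS.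
move=> b br.
pose st k := stt (mkseq b k); pose tt k := mt (mkseq b k).
have stp : forall k, [/\ b k \in atoms (delta (st k) (out (tt k))),
    st k.+1 = (b k).2, tt k.+1 = tau (tt k) (b k).1 &
    rank_cmp Acc cls isN (st k) (st k.+1) (rho (st k) (tt k)) (rho (st k.+1) (tt k.+1))].
  move=> k; have := br k.+1; rewrite mkseqS => /Rs_inv [_ h1 _ h3].
  by rewrite /st /tt mkseqS stt_rcons mt_rcons.
have clsstep : forall k, (cls (st k.+1) == cls (st k)) || ltK (cls (st k.+1)) (cls (st k)).
  move=> k; case: (stp k) => h1 -> _ _.
  by case: Hhes => _ [_ /(_ (st k) (out (tt k))) [/(_ _ h1) ]].
have [M _ HM] : exists2 M, 0 <= M & forall k, M <= k -> mu (cls (st k)) = mu (cls (st M)).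
  apply: (noninc_stab (f := fun k => mu (cls (st k)))) => k _.
  case/orP: (clsstep k) => [/eqP->//|/mu_lt]; exact: ltnW.
have HC : forall k, M <= k -> cls (st k) = cls (st M).
  elim=> [|k IH]; first by rewrite leqn0 => /eqP->.
  rewrite leq_eqVlt => /orP[/eqP<-//|hk].
  case/orP: (clsstep k) => [/eqP->|lt]; first by apply: IH.
  by have := mu_lt lt; rewrite (HM k.+1 (ltnW hk)) (HM k hk) ltnn.
exists (cls (st M)), M; split.
  by move=> k hk; rewrite bstates_mk HC.
have rk : forall k, M <= k -> rank_cmp Acc cls isN (st k) (st k.+1) (rho (st k) (tt k)) (rho (st k.+1) (tt k.+1)).
  by move=> k _; case: (stp k).
have same : forall k, M <= k -> cls (st k) == cls (st k.+1).
  by move=> k hk; rewrite HC // HC // (leq_trans hk).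
case hN: (isN (cls (st M))).
- move=> m; apply: NNPP => nex.
  apply: (strict_dec_false (f := fun k => rho (st k) (tt k)) (N := maxn m M)) => k hk.
  have := rk k (leq_trans (leq_maxr _ _) hk).
  rewrite /rank_cmp (same k (leq_trans (leq_maxr _ _) hk)) HC ?hN ?(leq_trans (leq_maxr _ _) hk) //.
  case hA: (st k \in Acc) => //= _; case: nex; exists k; split.
    exact: leq_trans (leq_maxl _ _) hk.
  by rewrite bstates_mk.
- have ni : forall k, M <= k -> rho (st k.+1) (tt k.+1) <= rho (st k) (tt k).
    move=> k hk; have := rk k hk.
    rewrite /rank_cmp (same k hk) HC ?hN //.
    by case: (st k \in Acc) => //; apply: ltnW.
  have [M' hM' HM'] := noninc_stab ni.
  exists M' => k hk; rewrite bstates_mk; apply/negP => hA.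
  have := rk k (leq_trans hM' hk).
  rewrite /rank_cmp (same k (leq_trans hM' hk)) HC ?hN ?(leq_trans hM' hk) //.
  change (stt (mkseq b k)) with (st k) in hA; rewrite hA.
  by rewrite (HM' k.+1 (leq_trans hk (leqnSn _))) (HM' k hk) ltnn.
Qed.
End Sound.

Lemma take_cat_le (A : Type) (y z : seq A) i : i <= size y -> take i (y ++ z) = take i y.
Proof.
rewrite leq_eqVlt => /orP[/eqP->|lt]; first by rewrite take_size_cat // take_size.
by rewrite take_cat lt.
Qed.

Section Complete.
Variable R : seq atom -> Prop.
Hypothesis Rrun : run_tree q0 delta l R.
Hypothesis Racc : forall b, branch R b -> hesitant_accepting Acc cls isN (bstates q0 b).

Lemma Rpre x a : R (rcons x a) -> R x.
Proof. by case: Rrun => _ [H _]; apply: H. Qed.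

Lemma Rkids x : R x -> peval (fun a => R (rcons x a)) (delta (stt x) (out (mt x))).
Proof. by case: Rrun => _ [_ H]; apply: H. Qed.

Lemma no_bad_chain (X : nat -> seq atom) j :
  (forall m, exists2 y, 0 < size y & X m.+1 = X m ++ y) ->
  (forall m, R (X m)) ->
  (forall m i, size (X 0) <= i <= size (X m) -> cls (stt (take i (X m))) = j) ->
  (if isN j then forall m i, size (X 0) <= i <= size (X m) -> stt (take i (X m)) \notin Acc
   else forall m, stt (X m) \in Acc) -> False.
Proof.
move=> HX RX Hc Ha.
have [b [mk [sz tk]]] := limit_branch (set0, q0) HX.
have br : branch R b.
  by move=> k; rewrite tk; apply: (prefix_take Rpre); apply: RX.
have [j' [N [HN Hacc]]] := Racc br.
have stk : forall k, bstates q0 b k = stt (take k (X k)) by move=> k; rewrite bstates_mk tk.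
have cj : forall k, size (X 0) <= k -> cls (bstates q0 b k) = j.
  by move=> k hk; rewrite stk; apply: Hc; rewrite hk sz.
have jj : j' = j.
  by rewrite -(HN (N + size (X 0))) ?leq_addr // cj // leq_addl.
subst j'; move: Hacc Ha; case: (isN j).
- move=> /(_ (size (X 0))) [k [hk hA]] Ha.
  have : stt (take k (X k)) \notin Acc by apply: Ha; rewrite hk sz.
  by rewrite -stk hA.
- move=> [m Hm] Ha.
  have := Hm (size (X m)) (sz m).
  by rewrite bstates_mk mk Ha.
Qed.

Definition rchP q t := exists x, R x /\ stt x = q /\ mt x = t.
Definition rch q t := dec (rchP q t).

Lemma rch_node x : R x -> rch (stt x) (mt x).
Proof. by move=> Rx; apply/decP; exists x. Qed.

Lemma rch_kids x a : R (rcons x a) -> rch a.2 (tau (mt x) a.1).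
Proof. by move/rch_node; rewrite stt_rcons mt_rcons. Qed.

Definition stepN (S : Q -> T -> Prop) q t :=
  exists2 c, c \in dnf (delta q (out t)) & forall a, a \in c ->
    rch a.2 (tau t a.1) /\ (cls a.2 = cls q -> S a.2 (tau t a.1)).

Fixpoint E n q t : Prop :=
  match n with
  | 0 => rch q t /\ (q \in Acc \/ stepN (fun _ _ => False) q t)
  | n'.+1 => E n' q t \/ (rch q t /\ stepN (E n') q t)
  end.

Lemma E_mono n m q t : n <= m -> E n q t -> E m q t.
Proof.
elim: m => [|m IH]; first by rewrite leqn0 => /eqP->.
rewrite leq_eqVlt => /orP[/eqP->//|hn] h /=; left; exact: IH.
Qed.

Lemma E_list (c : seq atom) (P : atom -> Prop) t :
  (forall a, a \in c -> P a -> exists n, E n a.2 (tau t a.1)) ->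
  exists n, forall a, a \in c -> P a -> E n a.2 (tau t a.1).
Proof.
elim: c => [|a c IH] H; first by exists 0.
have [n Hn] := IH (fun b hb => H b (mem_behead (s := a :: c) hb)).
case: (classic (P a)) => [pa|npa].
  have [m Hm] := H a (mem_head _ _) pa.
  exists (maxn n m) => b; rewrite inE => /orP[/eqP->|hb] pb.
    exact: E_mono (leq_maxr _ _) Hm.
  exact: E_mono (leq_maxl _ _) (Hn b hb pb).
exists n => b; rewrite inE => /orP[/eqP->|hb] pb //; exact: Hn.
Qed.

Lemma E_rch n q t : E n q t -> rch q t.
Proof.
elim: n => [[]//|n IH /= [h|[]//]]; exact: IH.
Qed.

Lemma E_dec n q t : E n q t -> q \notin Acc ->
  exists2 c, c \in dnf (delta q (out t)) & forall a, a \in c ->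
    rch a.2 (tau t a.1) /\ (cls a.2 = cls q -> exists2 m, m < n & E m a.2 (tau t a.1)).
Proof.
elim: n => [|n IH] /=.
  case=> _ [->//|[c hc Hc]] _; exists c => // a ha.
  by case: (Hc a ha) => h1 h2; split => // /h2.
case=> [h|[_ [c hc Hc]]] hA.
  have [c hc Hc] := IH h hA; exists c => // a ha.
  case: (Hc a ha) => h1 h2; split => // /h2 [m hm Em]; exists m => //; exact: ltnW.
exists c => // a ha; case: (Hc a ha) => h1 h2; split => // /h2 Em; by exists n.
Qed.

Lemma E_complete x : R x -> isN (cls (stt x)) -> exists n, E n (stt x) (mt x).
Proof.
move=> Rx hN; apply: NNPP => nE.
pose j := cls (stt x).
pose P y := [/\ R y, size x <= size y & forall i, size x <= i <= size y ->
  cls (stt (take i y)) = j /\ ~ (exists n, E n (stt (take i y)) (mt (take i y)))].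
have P0 : P x.
  split => // i; rewrite -eqn_leq => /eqP<-; rewrite take_size; split => //.
have step : forall y, P y -> exists2 z, 0 < size z & P (y ++ z).
  move=> y [Ry sy Hy].
  have := Hy (size y); rewrite sy leqnn take_size => /(_ isT) [cy nEy].
  have [c hc Hc] := peval_dnf (Rkids Ry).
  have [a [ha [ca nEa]]] : exists a, [/\ a \in c, cls a.2 = cls (stt y) &
      ~ exists n, E n a.2 (tau (mt y) a.1)].
    apply: NNPP => nex.
    have [n Hn] : exists n, forall a, a \in c -> cls a.2 = cls (stt y) ->
        E n a.2 (tau (mt y) a.1).
      apply: E_list => a ha pa; apply: NNPP => ne; apply: nex; by exists a.
    apply: nEy; exists n.+1; right; split; first exact: rch_node.
    exists c => // a ha'; split; [exact: rch_kids (Hc a ha')|exact: Hn].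
  exists [:: a] => //; rewrite cats1; split.
  - exact: Hc.
  - by rewrite size_rcons (leq_trans sy).
  - move=> i /andP[hi1]; rewrite size_rcons leq_eqVlt => /orP[/eqP ->|hi2].
      rewrite -(size_rcons y a) take_size stt_rcons mt_rcons ca cy; split => //.
    rewrite -cats1 take_cat_le //; apply: Hy; by rewrite hi1.
have [X [X0 HX]] := chain_exists P0 step.
apply: (no_bad_chain (X := X) (j := j)).
- by move=> m; case: (HX m).
- by move=> m; case: (HX m) => -[].
- by move=> m i; rewrite X0 => hi; case: (HX m) => -[_ _ /(_ i hi) []].
- rewrite hN => m i; rewrite X0 => hi; apply/negP => hA.
  case: (HX m) => -[RXm _ /(_ i hi) [_ nE']] _; apply: nE'; exists 0; split => //.
  by apply: rch_node; exact: (prefix_take Rpre).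
  by left.
Qed.

Definition rhoN q t :=
  match excluded_middle_informative (exists n, dec (E n q t)) with
  | left h => ex_minn h
  | right _ => 0
  end.

Lemma rhoN_spec q t : (exists n, E n q t) ->
  E (rhoN q t) q t /\ forall n, E n q t -> rhoN q t <= n.
Proof.
move=> [n0 h0]; rewrite /rhoN; case: excluded_middle_informative => [h|nh].
  case: ex_minnP => m /decP hm hmin; split => // n /decP; exact: hmin.
by case: nh; exists n0; apply/decP.
Qed.

Definition forced q t (a : atom) :=
  exists2 C, C \in cnf (delta q (out t)) &
    a \in C /\ forall b, b \in C -> cls b.2 != cls q -> ~~ rch b.2 (tau t b.1).
Definition vstar q t (a : atom) :=
  rch a.2 (tau t a.1) /\ (cls a.2 = cls q -> forced q t a).
Definition edge (p p' : Q * T) :=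
  ~~ isN (cls p.1) /\
  exists a : atom, [/\ vstar p.1 p.2 a, cls a.2 = cls p.1 & p' = (a.2, tau p.2 a.1)].

Inductive reach : Q * T -> Q * T -> Prop :=
| rrefl p : reach p p
| rstep p w v : edge p w -> reach w v -> reach p v.

Lemma vstar_peval x : R x -> peval (vstar (stt x) (mt x)) (delta (stt x) (out (mt x))).
Proof.
move=> Rx; apply: cnf_peval => C hC.
have [a ha Ra] := peval_cnf (Rkids Rx) hC.
case: (classic (exists2 b, b \in C & cls b.2 != cls (stt x) /\ rch b.2 (tau (mt x) b.1)))
  => [[b hb [nb rb]]|nex].
  exists b => //; split => // e; by rewrite e eqxx in nb.
exists a => //; split; first exact: rch_kids Ra.
move=> _; exists C => //; split => // b hb nb; apply/negP => rb; apply: nex; by exists b.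
Qed.

Lemma lift_edge x a : R x -> ~~ isN (cls (stt x)) -> vstar (stt x) (mt x) a ->
  cls a.2 = cls (stt x) -> R (rcons x a).
Proof.
move=> Rx hU [ra /(_ _) fa] ca; have [C hC [aC nC]] := fa ca.
have [b hb Rb] := peval_cnf (Rkids Rx) hC.
have cb : cls b.2 == cls (stt x).
  apply: contraT => nb; have := nC b hb nb; by rewrite (rch_kids Rb).
case: Hhes => _ [_ /(_ (stt x) (out (mt x))) [_]]; rewrite (negbTE hU).
move=> /allP /(_ C hC) /undup_le1 eq; rewrite (eq a b) //; rewrite mem_filter ?cb ?ca ?eqxx //.
Qed.

Lemma lift_reach p v : reach p v -> forall x, R x -> (stt x, mt x) = p ->
  exists y, [/\ R (x ++ y), (stt (x ++ y), mt (x ++ y)) = v &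
    forall i, i <= size y -> cls (stt (x ++ take i y)) = cls p.1].
Proof.
elim=> [{}p|{}p w {}v [hU [a [va ca ew]]] _ IH] x Rx ex.
  exists [::]; rewrite cats0; split => // i _; by rewrite -ex.
subst w; move: ex hU va ca IH; case: p => q t [<- <-] /= hU va ca IH.
have Rxa := lift_edge Rx hU va ca.
have [y [Ry ey Hy]] := IH (rcons x a) Rxa (ltac:(by rewrite stt_rcons mt_rcons)).
exists (a :: y); split.
- by rewrite -cat_rcons.
- by rewrite -cat_rcons.
- case=> [|i] hi; first by rewrite /= cats0.
  by rewrite /= -cat_rcons Hy.
Qed.

Lemma no_acc_cycle p w : rch p.1 p.2 -> p.1 \in Acc -> edge p w -> reach w p -> False.
Proof.
case: p => q t /= /decP [x0 [Rx0 [sx0 mx0]]] hA [hU [a [va ca ew]]] rw.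
subst w q t.
pose P y := [/\ R y, (stt y, mt y) = (stt x0, mt x0) &
  forall i, size x0 <= i <= size y -> cls (stt (take i y)) = cls (stt x0)].
have P0 : P x0.
  split => // i; rewrite -eqn_leq => /eqP<-; by rewrite take_size.
have step : forall y, P y -> exists2 z, 0 < size z & P (y ++ z).
  move=> y [Ry ey Hy]; case: ey => sy my.
  rewrite /= -sy -my in va ca rw hU.
  have Rya := lift_edge Ry hU va ca.
  have [z [Rz ez Hz]] := lift_reach rw Rya (ltac:(by rewrite stt_rcons mt_rcons)).
  exists (a :: z) => //; split.
  - by rewrite -cat_rcons.
  - by rewrite -cat_rcons ez -sy -my.
  - move=> i /andP[hi1 hi2]; case: (leqP i (size y)) => hiy.
      by rewrite take_cat_le // Hy // hi1.
    rewrite take_cat ltnNge (ltnW hiy) /=.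
    have -> : i - size y = (i - size y).-1.+1 by rewrite prednK // subn_gt0.
    rewrite /= -cat_rcons Hz /= ?ca ?sy //.
    move: hi2; rewrite size_cat /=; lia.
have [X [X0 HX]] := chain_exists P0 step.
apply: (no_bad_chain (X := X) (j := cls (stt x0))).
- by move=> m; case: (HX m).
- by move=> m; case: (HX m) => -[].
- by move=> m i; rewrite X0 => hi; case: (HX m) => -[_ _ /(_ i hi)].
- rewrite (negbTE hU) => m; case: (HX m) => -[_ [-> _] _] _; exact: hA.
Qed.

Definition rhoU q t := #|[set u : Q * T | dec (u.1 \in Acc /\ reach (q, t) u)]|.

Lemma rhoU_edge p w : rch p.1 p.2 -> edge p w ->
  rhoU w.1 w.2 <= rhoU p.1 p.2 /\ (p.1 \in Acc -> rhoU w.1 w.2 < rhoU p.1 p.2).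
Proof.
move=> rp e.
have sub : [set u : Q * T | dec (u.1 \in Acc /\ reach (w.1, w.2) u)] \subset
           [set u : Q * T | dec (u.1 \in Acc /\ reach (p.1, p.2) u)].
  apply/subsetP => u; rewrite !inE => /decP [hu ru]; apply/decP; split => //.
  by move: ru e; case: p rp => q t; case: w => q' t' _ ru e; apply: rstep ru.
split; first exact: subset_leq_card.
move=> hA; apply: proper_card; apply/properP; split => //; clear sub.
exists (p.1, p.2).
  by rewrite inE; apply/decP; split => //; apply: rrefl.
rewrite inE; apply/negP => /decP [_]; case: p rp hA e => q t rp hA e /= rw.
by apply: (no_acc_cycle rp hA e); case: w e rw.
Qed.

Definition rhoC q t := if isN (cls q) then rhoN q t else rhoU q t.

Lemma complete_annot : rch q0 t0 /\ forall q t, rch q t ->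
  peval (fun x : atom => rch x.2 (tau t x.1) /\
          rank_cmp Acc cls isN q x.2 (rhoC q t) (rhoC x.2 (tau t x.1)))
        (delta q (out t)).
Proof.
split.
  apply/decP; exists [::]; split => //; by case: Rrun.
move=> q t /decP [x [Rx [<- <-]]].
case hN: (isN (cls (stt x))).
- have [En _] := rhoN_spec (E_complete Rx hN).
  case hA: (stt x \in Acc).
  + apply: peval_mono (Rkids Rx) => a _ Ra; split; first exact: rch_kids Ra.
    by rewrite /rank_cmp hN hA; case: ifP.
  + have [c hc Hc] := E_dec En (negbT hA).
    apply: (dnf_peval hc) => a ha; case: (Hc a ha) => ra hE; split => //.
    rewrite /rank_cmp; case: eqP => // e.
    rewrite hN hA /rhoC -e hN /=.
    have [m hm Em] := hE (esym e).
    have [_ hmin] := rhoN_spec (ex_intro _ m Em).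
    exact: leq_ltn_trans (hmin m Em) hm.
- apply: peval_mono (vstar_peval Rx) => a _ va; split; first by case: va.
  rewrite /rank_cmp; case: eqP => // e.
  have ed : edge (stt x, mt x) (a.2, tau (mt x) a.1).
    by split; [rewrite /= hN | exists a; split].
  have [h1 h2] := rhoU_edge (p := (stt x, mt x)) (rch_node Rx) ed.
  rewrite hN /rhoC -e hN; case: ifP => hA; [exact: h2 | exact: h1].
Qed.
End Complete.
End Run.

Theorem mainTheorem4
  (I O T Q K : finType)
  (t0 : T) (tau : T -> {set I} -> T) (out : T -> {set O})
  (Phi : sform I O)
  (q0 : Q) (delta : Q -> {set O} -> pbf ({set I} * Q)) (Acc : {set Q})
  (cls : Q -> K) (isN : K -> bool) (ltK : rel K) :
  hesitant delta cls isN ltK ->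
  (forall l : ltree I O, accepts q0 delta Acc cls isN l <-> sat_s l [::] Phi) ->
  (moore_models t0 tau out Phi <->
   exists (rch : Q -> T -> bool) (rho : Q -> T -> nat),
     rch q0 t0 /\
     forall (q : Q) (t : T), rch q t ->
       peval (fun x : {set I} * Q =>
                rch x.2 (tau t x.1) /\
                rank_cmp Acc cls isN q x.2 (rho q t) (rho x.2 (tau t x.1)))
             (delta q (out t))).
Proof.
move=> Hh Haut; rewrite /moore_models -Haut; split.
- case=> R [Rrun Racc].
  have [h0 hs] := complete_annot Hh Rrun Racc.
  by eexists; eexists; split; [exact: h0 | exact: hs].
- case=> rch [rho [h0 hs]]. exact: (sound Hh h0 hs).
Qed.
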